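(* Let $H$ be a graph, let $G$ be a connected graph, and let $((H^{\Phi},\Phi);(T,\mathcal{X}))$ be an $H$-profile of $G$. Then there exists $t \in V(T)$ such that the set $\bigcup_{x \in \mathcal{X}(t)} V_x$ is a longest path transversal of $G$.
   Context: All graphs are finite and simple. A subdivision $H'$ of $H$ is obtained by replacing each edge $xy$ of $H$ by a path from $x$ to $y$ of length at least one, with the interiors of these paths pairwise disjoint and anticomplete. An $H$-representation of $G$ is a pair $(H^{\Phi},\Phi)$ where $H^{\Phi}$ is a subdivision of $H$ and $\Phi: V(G)\to 2^{V(H^{\Phi})}$ is such that each $H^{\Phi}[\Phi(v)]$ is connected and, for distinct $u,v\in V(G)$, $uv\in E(G)$ iff $\Phi(u)\cap\Phi(v)\neq\emptyset$. It is nice if every vertex of $H^{\Phi}$ lies in some $\Phi(v)$ and for every edge $xy$ of $H^{\Phi}$ some $\Phi(v)$ contains both $x$ and $y$. A tree decomposition of a graph $F$ is a pair $(T,\mathcal{X})$ with $T$ a tree and $\mathcal{X}:V(T)\to 2^{V(F)}$ such that every vertex of $F$ lies in some bag, every edge of $F$ has both ends in some bag, and for each vertex $v$ of $F$ the set $\{t: v\in\mathcal{X}(t)\}$ induces a nonempty connected subtree of $T$. An $H$-profile of $G$ is a tuple $((H^{\Phi},\Phi);(T,\mathcal{X}))$ where $(H^{\Phi},\Phi)$ is a nice $H$-representation of $G$ and $(T,\mathcal{X})$ is a tree decomposition of $H^{\Phi}$. For $x\in V(H^{\Phi})$, $V_x=\{v\in V(G): x\in\Phi(v)\}$. A longest path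 of $G$ is a path of maximum length in $G$; a longest path transversal is a set of vertices of $G$ meeting every longest path. *)

(* Defs.v *)
From mathcomp Require Import all_boot.
Set Implicit Arguments. Unset Strict Implicit. Unset Printing Implicit Defensive.

Record sgraph := SGraph {
  gvert :> finType;
  adj : rel gvert;
  adj_sym : symmetric adj;
  adj_irr : irreflexive adj }.

Definition connected_in (G : sgraph) (A : {set G}) : Prop :=
  A != set0 /\
  forall a b, a \in A -> b \in A ->
    connect [rel u v | [&& adj u v, u \in A & v \in A]] a b.

Definition connected_graph (G : sgraph) : Prop := connected_in [set: G].

Definition is_tree (T : sgraph) : Prop :=
  connected_graph T /\
  ~ (exists c : seq T, [/\ 3 <= size c, uniq c & cycle (@adj T) c]).

Definition consec (A : eqType) (s : seq A) (a b : A) : bool :=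
  (a, b) \in zip s (behead s).

(* S is a subdivision of H: branch vertices f x (f injective); for every
   (ordered) edge xy of H a sequence P x y of interior vertices, so that
   f x :: P x y ++ [:: f y] is the path replacing xy; P y x = rev (P x y);
   interiors are duplicate-free, avoid branch vertices, and are pairwise
   disjoint for distinct edges; every vertex of S is a branch vertex or
   interior vertex; the edges of S are exactly the consecutive pairs of
   the replacing paths (hence interiors are pairwise anticomplete). *)
Definition edge_path (H S : sgraph) (f : H -> S) (P : H -> H -> seq S)
  (x y : H) : seq S := f x :: P x y ++ [:: f y].

Definition is_subdivision (S H : sgraph) : Prop :=
  exists (f : H -> S) (P : H -> H -> seq S),
  injective f /\
  (forall x y, adj x y -> P y x = rev (P x y)) /\
  (forall x y, adj x y -> uniq (P x y)) /\
  (forall x y z, adj x y -> f z \notin P x y) /\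
  (forall x y u v, adj x y -> adj u v ->
     ~ ((u == x) && (v == y) || (u == y) && (v == x)) ->
     forall a, a \in P x y -> a \notin P u v) /\
  (forall a : S, (exists z, a = f z) \/
                 (exists x y, adj x y /\ a \in P x y)) /\
  (forall a b : S, adj a b <->
     exists x y, adj x y /\ consec (edge_path f P x y) a b).

Definition representation (H G S : sgraph) (Phi : G -> {set S}) : Prop :=
  [/\ is_subdivision S H,
      forall v, connected_in (Phi v) &
      forall u v, u != v -> (adj u v <-> Phi u :&: Phi v != set0)].

Definition nice_representation (H G S : sgraph) (Phi : G -> {set S}) : Prop :=
  [/\ representation H Phi,
      forall a : S, exists v, a \in Phi v &
      forall a b : S, adj a b -> exists v, (a \in Phi v) && (b \in Phi v)].

Definition tree_decomposition (S T : sgraph) (X : T -> {set S}) : Prop :=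
  [/\ is_tree T,
      forall a : S, exists t, a \in X t,
      forall a b : S, adj a b -> exists t, (a \in X t) && (b \in X t) &
      forall a : S, connected_in [set t | a \in X t]].

Definition H_profile (H G S T : sgraph) (Phi : G -> {set S})
  (X : T -> {set S}) : Prop :=
  nice_representation H Phi /\ tree_decomposition X.

Definition Vx (G S : sgraph) (Phi : G -> {set S}) (x : S) : {set G} :=
  [set v | x \in Phi v].

(* paths in G: nonempty duplicate-free vertex sequences with consecutive
   vertices adjacent; length = number of edges = size - 1 *)
Definition is_gpath (G : sgraph) (p : seq G) : bool :=
  if p is a :: q then uniq p && path (@adj G) a q else false.

Definition longest_path (G : sgraph) (p : seq G) : Prop :=
  is_gpath p /\ forall q : seq G, is_gpath q -> size q <= size p.

Definition lp_transversal (G : sgraph) (A : {set G}) : Prop :=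
  forall p, longest_path p -> has (fun v => v \in A) p.

(* Main.v *)
Require Import Defs.
From mathcomp Require Import all_boot.
From mathcomp Require Import zify.
From Stdlib Require Import Classical.
Set Implicit Arguments. Unset Strict Implicit. Unset Printing Implicit Defensive.

Definition crel (G : sgraph) (A : {set G}) : rel G :=
  [rel u v | [&& adj u v, u \in A & v \in A]].

Lemma uconnect (T : finType) (e : rel T) x y : connect e x y ->
  exists p, [/\ path e x p, y = last x p & uniq (x :: p)].
Proof.
move/connectP=> [p pp ->]; case: (shortenP pp) => p' pp' up' _.
by exists p'.
Qed.

Lemma crel_lift (G : sgraph) (A B : {set G}) x y : A \subset B ->
  connect (crel A) x y -> connect (crel B) x y.
Proof.
move=> AB; apply: connect_sub => u v /and3P[uv uA vA]; apply: connect1.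
by rewrite /crel /= uv !(subsetP AB).
Qed.

Lemma conn_in_sub (G : sgraph) (A B : {set G}) x y : A \subset B ->
  connected_in A -> x \in A -> y \in A -> connect (crel B) x y.
Proof. by move=> AB [_ cA] xA yA; apply: crel_lift AB (cA _ _ xA yA). Qed.

Lemma conn_union (G : sgraph) (A B : {set G}) z :
  connected_in A -> connected_in B -> z \in A -> z \in B ->
  connected_in (A :|: B).
Proof.
move=> cA cB zA zB; split.
  by apply/set0Pn; exists z; rewrite inE zA.
have sA : A \subset A :|: B by apply: subsetUl.
have sB : B \subset A :|: B by apply: subsetUr.
have H : forall a, a \in A :|: B -> connect (crel (A :|: B)) a z.
  move=> a; rewrite inE => /orP[aA|aB].
    exact: conn_in_sub sA cA aA zA.
  exact: conn_in_sub sB cB aB zB.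
have Hs : forall a, a \in A :|: B -> connect (crel (A :|: B)) z a.
  move=> a; rewrite inE => /orP[aA|aB].
    exact: conn_in_sub sA cA zA aA.
  exact: conn_in_sub sB cB zB aB.
move=> a b aAB bAB; apply: connect_trans (H a aAB) (Hs b bAB).
Qed.

Definition acyclic (T : sgraph) :=
  ~ (exists c : seq T, [/\ 3 <= size c, uniq c & cycle (@adj T) c]).

Definition is_leaf (T : sgraph) (A : {set T}) l p :=
  [/\ l \in A, p \in A, adj l p & forall q, q \in A -> adj l q -> q = p].

Lemma leaf_exists (T : sgraph) (A : {set T}) : acyclic T ->
  connected_in A -> 2 <= #|A| -> exists l p, is_leaf A l p.
Proof.
move=> acy [nA cA] cardA.
apply: NNPP => NL.
have step : forall x r, x \in A -> r \in A -> adj x r ->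
    exists2 y, y \in A & adj x y && (y != r).
  move=> x r xA rA xr; apply: NNPP => Hn; apply: NL; exists x, r; split=> //.
  move=> q qA xq; apply: NNPP => qr; apply: Hn; exists q => //.
  by rewrite xq; apply/eqP.
have base : exists x y, [/\ x \in A, y \in A & adj x y].
  have [a aA] : exists a, a \in A by apply/set0Pn.
  have [b /andP[bA ba]] : exists b, (b \in A) && (b != a).
    apply/existsP; apply: contraTT cardA => /existsPn Hb.
    rewrite -ltnNge ltnS; apply/card_le1P => u uA w.
    have Ha : forall b, b \in A -> b = a.
      by move=> b bA; move: (Hb b); rewrite bA /= => /negPn/eqP.
    by rewrite inE (Ha u uA); apply/idP/eqP => [/Ha //| ->].
  have := cA _ _ aA bA; move/connectP=> [p pp bl].
  case: p pp bl => [|c p] /=; first by move=> _ bl; rewrite bl eqxx in ba.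
  move=> /andP[/and3P[ac _ cA'] _] _; exists a, c; split=> //.
have grow : forall k, exists x r, [/\ path (@adj T) x r, uniq (x :: r),
    all (fun v => v \in A) (x :: r) & size r = k.+1].
  elim=> [|k [x [r [pr ur ar sr]]]].
    case: base => x [y [xA yA xy]]; exists y, [:: x]; split=> //=.
      by rewrite adj_sym xy.
      rewrite inE andbT; apply/eqP => yx; move: xy; rewrite yx.
      by rewrite (adj_irr x).
    by rewrite xA yA.
  case: r pr ur ar sr => [//|r1 r'] pr ur ar sr.
  move: (ar) => /= /and3P[xA r1A _]; move: (pr) => /= /andP[xr1 _].
  have [y yA /andP[xy yr1]] := step _ _ xA r1A xr1.
  case: (boolP (y \in x :: r1 :: r')) => yin.
    exfalso; apply: acy.
    move: yin; rewrite inE => /orP[/eqP yx|].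
      by move: xy; rewrite yx adj_irr.
    move=> yin; have yin' : y \in r' by move: yin; rewrite inE (negbTE yr1).
    case/splitPr: yin' pr ur => p1 p2 pr ur.
    exists (x :: r1 :: p1 ++ [:: y]); split.
    - by rewrite /= size_cat addn1.
    - apply: subseq_uniq ur; rewrite -!cat_cons; apply: cat_subseq => //.
      by rewrite /= eqxx sub0seq.
    - move: pr; rewrite -cat_cons cat_path => /andP[pr1 /= /andP[ly _]].
      move: pr1 => /= /andP[-> pr1]; rewrite rcons_cat /= cat_path pr1 /=.
      by move: ly; rewrite /= => ->; rewrite adj_sym xy.
  exists y, (x :: r1 :: r'); split=> //=.
  - by rewrite adj_sym xy.
  - by rewrite yin.
  - by rewrite yA.
  - by move: sr => /= ->.
have [x [r [_ ur ar sr]]] := grow #|A|.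
have : size (x :: r) <= #|A|.
  rewrite cardE; apply: uniq_leq_size => // v vin.
  by rewrite mem_enum; move/allP: ar; apply.
by rewrite /= sr ltnNge leqnSn.
Qed.

Lemma leaf_avoid (T : sgraph) (A B : {set T}) l p a b : is_leaf A l p ->
  B \subset A -> connected_in B -> a \in B :\ l -> b \in B :\ l ->
  connect (crel (B :\ l)) a b.
Proof.
move=> [lA pA lp lu] BA [_ cB]; rewrite !inE => /andP[al aB] /andP[bl bB].
have [q [pq bq uq]] := uconnect (cB _ _ aB bB).
have lnq : l \notin a :: q.
  apply/negP => lin; move: lin; rewrite inE eq_sym (negbTE al) /= => lin.
  case/splitPr: lin pq bq uq => p1 p2 pq bq uq.
  case: p2 pq bq uq => [|z p2] pq bq uq.
    by move: bq; rewrite last_cat /= => bE; rewrite bE eqxx in bl.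
  move: pq; rewrite cat_path => /andP[_ /= /and3P[/and3P[wl wB _] /and3P[lz _ zB] _]].
  have wp : last a p1 = p by apply: lu; [apply: (subsetP BA) | rewrite adj_sym].
  have zp : z = p by apply: lu => //; apply: (subsetP BA).
  move: uq; rewrite -cat_cons cat_uniq => /and3P[_ /hasPn H _].
  have := H z; rewrite !inE eqxx orbT => /(_ isT); rewrite zp -wp.
  by have := mem_last a p1; rewrite inE => ->.
apply/connectP; exists q => //.
apply: (@sub_in_path _ [pred v | v != l]) pq.
  move=> u v; rewrite !inE => ul vl /and3P[uv uB vB].
  by rewrite /crel /= uv !inE ul vl uB vB.
by apply/allP => v vin; rewrite inE; apply: contraNneq lnq => <-.
Qed.

Lemma leaf_nbr (T : sgraph) (A B : {set T}) l p b : is_leaf A l p ->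
  B \subset A -> connected_in B -> l \in B -> b \in B -> b != l -> p \in B.
Proof.
move=> [lA pA lp lu] BA [_ cB] lB bB bl.
have /connectP[q pq bq] := cB _ _ lB bB.
case: q pq bq => [|z q] /=; first by move=> _ bE; rewrite bE eqxx in bl.
move=> /andP[/and3P[lz _ zB] _] _.
by have <- : z = p by apply: lu => //; apply: (subsetP BA).
Qed.

Lemma helly (T : sgraph) : acyclic T -> forall n (A : {set T}), #|A| = n ->
  connected_in A -> forall F : {set T} -> Prop,
  (forall B, F B -> B \subset A /\ connected_in B) ->
  (forall B C, F B -> F C -> B :&: C != set0) ->
  exists2 t, t \in A & forall B, F B -> t \in B.
Proof.
move=> acy; elim=> [|n IH] A cardA cA F HF HI.
  by case: cA => nA _; move: nA; rewrite -card_gt0 cardA.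
case: n IH cardA => [|n] IH cardA.
  have /cards1P[a Aa] : #|A| == 1 by rewrite cardA.
  exists a; first by rewrite Aa set11.
  move=> B FB; have [BA [nB _]] := HF B FB.
  have [b bB] := set0Pn _ nB.
  by have := subsetP BA b bB; rewrite Aa inE => /eqP <-.
have [l [p leaf]] : exists l p, is_leaf A l p.
  by apply: leaf_exists => //; rewrite cardA.
have [lA pA lp lu] := leaf.
have pl : p != l by apply/eqP => pE; move: lp; rewrite pE adj_irr.
case: (classic (exists B, F B /\ B \subset [set l])) => [[B [FB Bl]]|NS].
  exists l => // C FC; have := HI _ _ FB FC; case/set0Pn => z.
  by rewrite inE => /andP[/(subsetP Bl)]; rewrite inE => /eqP ->.
have Hnl : forall B, F B -> exists2 b, b \in B & b != l.
  move=> B FB; apply: NNPP => Hb; apply: NS; exists B; split => //.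
  apply/subsetP => b bB; rewrite inE; apply: NNPP => /negP bl.
  by apply: Hb; exists b.
have cD : forall B, F B -> connected_in (B :\ l).
  move=> B FB; have [BA cB] := HF B FB; split.
    by have [b bB bl] := Hnl B FB; apply/set0Pn; exists b; rewrite !inE bl.
  by move=> a b aB bB; apply: leaf_avoid leaf BA cB aB bB.
have cA' : connected_in (A :\ l).
  split; first by apply/set0Pn; exists p; rewrite !inE pl.
  by move=> a b aA bA; apply: leaf_avoid leaf (subxx A) cA aA bA.
have [t tA Ht] : exists2 t, t \in A :\ l &
    forall B', (exists B, F B /\ B' = B :\ l) -> t \in B'; last first.
  exists t; first by move: tA; rewrite inE => /andP[].
  move=> B FB; have := Ht (B :\ l) (ex_intro _ B (conj FB erefl)).
  by rewrite inE => /andP[].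
apply: IH => //.
- by move: cardA; rewrite (cardsD1 l) lA => -[].
- move=> B' [B [FB ->]]; have [BA cB] := HF B FB; split; last exact: cD.
  by apply: setSD.
- move=> _ _ [B [FB ->]] [C [FC ->]].
  have := HI _ _ FB FC; case/set0Pn => z; rewrite inE => /andP[zB zC].
  case: (eqVneq z l) => [zl|zl].
    have [b bB bl] := Hnl B FB; have [c cC cl] := Hnl C FC.
    have [BA cB] := HF B FB; have [CA cC'] := HF C FC.
    apply/set0Pn; exists p; rewrite !inE pl.
    rewrite (leaf_nbr leaf BA cB _ bB bl) ?(leaf_nbr leaf CA cC' _ cC cl) //.
    by rewrite -zl. by rewrite -zl.
  by apply/set0Pn; exists z; rewrite !inE zl zB zC.
Qed.

Lemma ar1 a b : b <= a -> a + b.+1 < 2 * a.+1. Proof. lia. Qed.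
Lemma ar2 a b : a < b -> a + b.+1 < 2 * b.+1. Proof. lia. Qed.

Section GP.
Variable G : sgraph.
Implicit Types s : seq G.

Definition gp s := uniq s && sorted (@adj G) s.

Lemma gp_rev s : gp (rev s) = gp s.
Proof.
rewrite /gp rev_uniq rev_sorted; congr andb; apply: eq_sorted => u v /=.
exact: adj_sym.
Qed.

Lemma gp_cat s1 s2 : gp (s1 ++ s2) -> gp s1 /\ gp s2.
Proof.
rewrite /gp cat_uniq => /andP[/and3P[u1 _ u2] /cat_sorted2[s1' s2']].
by rewrite u1 u2 s1' s2'.
Qed.

Lemma sorted_rcons_cat s x t :
  sorted (@adj G) (rcons s x ++ t) = sorted (@adj G) (rcons s x) && path (@adj G) x t.
Proof.
case: s => [|a s] //=; rewrite cat_path last_rcons //.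
Qed.

Lemma half s x : gp s -> x \in s -> exists s1,
  [/\ gp (rcons s1 x), {subset rcons s1 x <= s} & size s < 2 * size (rcons s1 x)].
Proof.
move=> gs xs; case/splitPr: xs gs => p1 p2 gs.
have [g1 g2] : gp (rcons p1 x) /\ gp p2 by apply: gp_cat; rewrite cat_rcons.
have [g3 g4] := gp_cat (s1 := p1) (s2 := x :: p2) gs.
case: (leqP (size p2) (size p1)) => hp.
  exists p1; split => //.
    by move=> v vin; rewrite -cat_rcons mem_cat vin.
  by rewrite size_cat /= size_rcons; apply: ar1.
exists (rev p2); split.
- by rewrite -rev_cons gp_rev.
- by move=> v; rewrite -rev_cons mem_rev => vin; rewrite mem_cat vin orbT.
- by rewrite size_cat /= size_rcons size_rev; apply: ar2.
Qed.

Lemma seg (P Q : pred G) : (forall v, P v -> ~~ Q v) ->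
  forall r a m0, P a -> all (fun v => ~~ P v && ~~ Q v) m0 ->
  path (@adj G) a (m0 ++ r) -> uniq (a :: m0 ++ r) -> Q (last a (m0 ++ r)) ->
  exists x m y, [/\ P x, Q y, path (@adj G) x (rcons m y),
     uniq (x :: rcons m y) & all (fun v => ~~ P v && ~~ Q v) m].
Proof.
move=> PQ; elim=> [|c r IH] a m0 Pa Hm pa ua Ql.
  exfalso; move: Ql; rewrite cats0.
  have : last a m0 \in a :: m0 by apply: mem_last.
  rewrite inE => /orP[/eqP ->|]; first by move: (PQ a Pa) => /negbTE ->.
  by move/allP: Hm => H /H /andP[_ /negbTE ->].
case Qc: (Q c).
  exists a, m0, c; split => //.
  - by move: pa; rewrite -cat_rcons cat_path => /andP[].
  - by apply: subseq_uniq ua; rewrite -cat_rcons -cat_cons prefix_subseq.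
case Pc: (P c).
  apply: (IH c [::]) => //.
  - by move: pa; rewrite cat_path => /andP[_ /= /andP[]].
  - by move: ua; rewrite -cat_cons cat_uniq => /and3P[_ _].
  - by move: Ql; rewrite last_cat.
apply: (IH a (rcons m0 c)) => //.
- by rewrite all_rcons Pc Qc Hm.
- by rewrite cat_rcons.
- by rewrite cat_rcons.
- by rewrite cat_rcons.
Qed.

End GP.

Lemma gp_gpath (G : sgraph) (s : seq G) : s != [::] -> gp s -> is_gpath s.
Proof. by case: s. Qed.

Lemma gpath_gp (G : sgraph) (s : seq G) : is_gpath s -> gp s /\ s != [::].
Proof. by case: s. Qed.

Lemma uniq3 (T : eqType) (P Q : pred T) (a b c : seq T) :
  uniq a -> uniq b -> uniq c -> {subset a <= P} -> {subset c <= Q} ->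
  all (fun v => ~~ P v && ~~ Q v) b -> (forall v, P v -> ~~ Q v) ->
  uniq (a ++ b ++ c).
Proof.
move=> ua ub uc aP cQ bO PQ.
rewrite cat_uniq ua cat_uniq ub uc /= andbT; apply/andP; split.
  apply/hasPn => v; rewrite mem_cat => /orP[vb|vc].
    by apply/negP => /aP; move/allP: bO => /(_ v vb) /andP[/negP].
  by apply/negP => /aP /PQ /negP; apply; apply: cQ.
apply/hasPn => v vc; apply/negP => vb.
by move/allP: bO => /(_ v vb) /andP[_ /negP]; apply; apply: cQ.
Qed.

Lemma ar3 a b c d m : a <= b -> b <= a -> a < 2 * c -> b < 2 * d ->
  c + m + d <= a -> False.
Proof. lia. Qed.

Lemma longest_meet (G : sgraph) (P Q : seq G) : connected_graph G ->
  longest_path P -> longest_path Q -> exists2 v, v \in P & v \in Q.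
Proof.
move=> [_ cG] [gP lP] [gQ lQ].
apply: NNPP => ND.
have PQ : forall v, v \in P -> ~~ (v \in Q).
  by move=> v vP; apply/negP => vQ; apply: ND; exists v.
have [[gP' nP] [gQ' nQ]] := (gpath_gp gP, gpath_gp gQ).
case: P gP lP gP' nP PQ ND => [//|a P'] gP lP gP' _ PQ ND.
case: Q gQ lQ gQ' nQ PQ ND => [//|b Q'] gQ lQ gQ' _ PQ ND.
have [r [pr br ur]] := uconnect (cG a b (in_setT a) (in_setT b)).
have pr' : path (@adj G) a ([::] ++ r).
  by apply: sub_path pr => u v /and3P[].
have lb : (mem (b :: Q')) (last a ([::] ++ r)) by rewrite /= -br mem_head.
have [x [m [y [xP yQ pm um am]]]] :=
  @seg G (mem (a :: P')) (mem (b :: Q')) PQ r a [::] (mem_head _ _) isT pr' ur lb.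
have [s1 [g1 sub1 sz1]] := half gP' xP.
have [s2 [g2 sub2 sz2]] := half gQ' yQ.
set F := rcons s1 x ++ m ++ rev (rcons s2 y).
have gF : is_gpath F.
  apply: gp_gpath; first by rewrite /F; case: (s1).
  apply/andP; split.
    apply: (uniq3 (P := mem (a :: P')) (Q := mem (b :: Q'))) => //.
    - by case/andP: g1.
    - apply: subseq_uniq um; apply: (subseq_trans _ (subseq_cons _ x)).
      by rewrite -cats1 prefix_subseq.
    - by rewrite rev_uniq; case/andP: g2.
    - by move=> v; rewrite mem_rev; apply: sub2.
  rewrite sorted_rcons_cat rev_rcons; case/andP: g1 => _ -> /=.
  rewrite -cat_rcons cat_path pm last_rcons /=.
  by have := g2; rewrite -gp_rev rev_rcons => /andP[].
have := lP _ gF; rewrite /F !size_cat size_rev.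
move=> h; apply: (ar3 (lQ _ gP) (lP _ gQ) sz1 sz2).
by rewrite -addnA; exact: h.
Qed.

Section P3.
Variables (G S T : sgraph) (Phi : G -> {set S}) (X : T -> {set S}).
Hypothesis Hbag : forall a : S, exists t, a \in X t.
Hypothesis Hbe : forall a b : S, adj a b -> exists t, (a \in X t) && (b \in X t).
Hypothesis Hbc : forall a : S, connected_in [set t | a \in X t].

Definition Tv v := [set t | X t :&: Phi v != set0].
Definition TP (P : seq G) := [set t | has (fun v => X t :&: Phi v != set0) P].

Lemma Tv_conn v : connected_in (Phi v) -> connected_in (Tv v).
Proof.
move=> [nP cP].
have base : forall a t t', a \in Phi v -> a \in X t -> a \in X t' ->
    connect (crel (Tv v)) t t'.
  move=> a t t' aP aXt aXt'; apply: (conn_in_sub _ (Hbc a)); rewrite ?inE //.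
  apply/subsetP => s; rewrite !inE => as'; apply/set0Pn; exists a.
  by rewrite inE as' aP.
split.
  have [a aP] := set0Pn _ nP; have [t aXt] := Hbag a.
  by apply/set0Pn; exists t; rewrite inE; apply/set0Pn; exists a; rewrite inE aXt aP.
move=> t1 t2; rewrite !inE => /set0Pn[a1 /setIP[a1t a1P]] /set0Pn[a2 /setIP[a2t a2P]].
have /connectP[p pp pl] := cP _ _ a1P a2P.
elim: p a1 t1 a1t a1P pp pl => [|b p IH] a t aXt aP /=.
  by move=> _ E; apply: (base a) => //; rewrite -E.
move=> /andP[/and3P[ab _ bP] pp] lt.
have [t0 /andP[aXt0 bt0]] := Hbe ab.
apply: connect_trans (base _ _ _ aP aXt aXt0) _.
exact: IH bP pp lt.
Qed.

Hypothesis HPhi : forall v, connected_in (Phi v).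
Hypothesis Hadj : forall u v : G, u != v -> (adj u v <-> Phi u :&: Phi v != set0).

Lemma Tv_n0 v : exists t, t \in Tv v.
Proof. by have [[/set0Pn[t tT] _]] := (Tv_conn (HPhi v), 0); exists t. Qed.

Lemma TP_conn v r : path (@adj G) v r -> connected_in (TP (v :: r)).
Proof.
elim: r v => [|w r IH] v /=.
  move=> _; have -> : TP [:: v] = Tv v by apply/setP => t; rewrite !inE /= orbF.
  exact: Tv_conn.
move=> /andP[vw pr].
have -> : TP [:: v, w & r] = Tv v :|: TP (w :: r).
  by apply/setP => t; rewrite !inE.
have vw' : v != w by apply/eqP => E; move: vw; rewrite E adj_irr.
have /set0Pn[a /setIP[av aw]] := (iffLR (Hadj vw') vw).
have [t aXt] := Hbag a.
apply: (@conn_union _ _ _ t (Tv_conn (HPhi v)) (IH w pr)).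
  by rewrite inE; apply/set0Pn; exists a; rewrite inE aXt av.
by rewrite inE /= ; apply/orP; left; apply/set0Pn; exists a; rewrite inE aXt aw.
Qed.

End P3.

Unset Implicit Arguments.

Theorem lemma4p1 (H G S T : sgraph) (Phi : G -> {set S}) (X : T -> {set S}) :
  connected_graph G -> H_profile H Phi X ->
  exists t : T, lp_transversal (\bigcup_(x in X t) Vx Phi x).
Proof.
move=> conG [[[Hsub HPhi Hadj] Hcov Hedge] [Htree Hbag Hbe Hbc]].
have acy : acyclic T by case: Htree.
have cT : connected_in [set: T] by case: Htree.
have [t _ Ht] : exists2 t, t \in [set: T] &
    forall B, (exists P, longest_path P /\ B = TP Phi X P) -> t \in B.
  apply: (helly acy (erefl _) cT).
    move=> _ [P [[gP _] ->]]; split; first exact: subsetT.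
    case: P gP => [//|v r] /andP[_ pr].
    exact: TP_conn.
  move=> _ _ [P [lP ->]] [Q [lQ ->]].
  have [v vP vQ] := longest_meet conG lP lQ.
  have [t tv] := Tv_n0 Hbag Hbe Hbc HPhi v.
  apply/set0Pn; exists t; rewrite !inE; apply/andP; split; apply/hasP; exists v => //.
    by move: tv; rewrite inE.
  by move: tv; rewrite inE.
exists t => P lP.
have := Ht _ (ex_intro _ P (conj lP erefl)).
rewrite inE => /hasP[v vP /set0Pn[x /setIP[xX xP]]].
apply/hasP; exists v => //; apply/bigcupP; exists x => //; by rewrite inE.
Qed.
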